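(* Let $S_{r,N}$ be a nontrivial atomic exponential Puiseux semiring. Then $|\Delta(S_{r,N})|=1$ if and only if $N=\mathbb{N}$.
   Context: $\mathbb{N}=\{0,1,2,\dots\}$. A numerical monoid $N$ is an additive submonoid of $\mathbb{N}$ with finite complement in $\mathbb{N}$. For $r\in\mathbb{Q}_{>0}$ write $r=\mathsf{n}(r)/\mathsf{d}(r)$ in lowest terms. The exponential Puiseux semiring $S_{r,N}$ is the additive submonoid of $\mathbb{Q}_{\ge0}$ generated by $\{r^k:k\in N\}$; it is nontrivial if $r\notin\mathbb{N}$, and then atomic iff $\mathsf{n}(r)>1$. For an atomic monoid $M$ and $x\in M$ with set of lengths $\mathsf{L}(x)$, a positive integer $d$ is a distance of $x$ if $\mathsf{L}(x)\cap\{l,\dots,l+d\}=\{l,l+d\}$ for some $l\in\mathsf{L}(x)$; $\Delta(M)$ is the union over $x\in M$ of the sets of distances of $x$. *)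

(* Defs.v *)
From mathcomp Require Import all_boot all_order all_algebra.
Set Implicit Arguments. Unset Strict Implicit. Unset Printing Implicit Defensive.
Import Order.TTheory GRing.Theory Num.Theory.
Local Open Scope ring_scope.

Definition numerical_monoid (N : nat -> Prop) : Prop :=
  [/\ N 0%N,
      (forall m n, N m -> N n -> N (m + n)%N)
    & exists b : nat, forall n, (b <= n)%N -> N n].

Definition puiseux_semiring (r : rat) (N : nat -> Prop) (x : rat) : Prop :=
  exists s : seq nat, (forall k, k \in s -> N k) /\
                      x = \sum_(k <- s) r ^+ k.

Definition is_atom (M : rat -> Prop) (a : rat) : Prop :=
  [/\ M a, a != 0 &
      forall b c, M b -> M c -> a = b + c -> b = 0 \/ c = 0].

Definition in_lengths (M : rat -> Prop) (x : rat) (l : nat) : Prop :=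
  exists s : seq rat, [/\ size s = l,
                          (forall a, a \in s -> is_atom M a) &
                          x = \sum_(a <- s) a].

Definition is_distance (M : rat -> Prop) (x : rat) (d : nat) : Prop :=
  (0 < d)%N /\
  exists l, [/\ in_lengths M x l, in_lengths M x (l + d)%N &
                forall k, (l < k < l + d)%N -> ~ in_lengths M x k].

Definition delta_set (M : rat -> Prop) (d : nat) : Prop :=
  exists x, M x /\ is_distance M x d.

(* Main.v *)
Require Import Defs.
From mathcomp Require Import all_boot all_order all_algebra.
From mathcomp Require Import zify ring lra.
From Stdlib Require Import Classical_Prop.
Set Implicit Arguments. Unset Strict Implicit. Unset Printing Implicit Defensive.
Import Order.TTheory GRing.Theory Num.Theory.
Local Open Scope ring_scope.

Lemma carry_int (na nb : nat) (Hna : (0 < na)%N) (Hco : coprime na nb) :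
  forall D (p : nat -> int) (w0 : int),
  \sum_(j < D) p j * na%:Z ^+ j * nb%:Z ^+ (D - j.+1) = w0 * nb%:Z ^+ D ->
  exists W : nat -> int, [/\ W 0%N = w0, W D = 0 &
     forall j, (j < D)%N -> p j = nb%:Z * W j - na%:Z * W j.+1].
Proof.
elim=> [|D IH] p w0 H.
  rewrite big_ord0 expr0 mulr1 in H.
  by exists (fun _ => 0); split.
rewrite big_ord_recl /= in H.
set S := \sum_(i < D) p i.+1 * na%:Z ^+ i * nb%:Z ^+ (D - i.+1).
have HS : \sum_(i < D) p (bump 0 i) * na%:Z ^+ (bump 0 i) * nb%:Z ^+ (D.+1 - (bump 0 i).+1)
   = na%:Z * S.
  rewrite /S mulr_sumr; apply: eq_bigr => i _.
  rewrite /bump /= add1n subSS exprS; ring.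
rewrite HS expr0 mulr1 subn1 /= exprS in H.
have Hdiv : (na%:Z %| (w0 * nb%:Z - p 0%N) * nb%:Z ^+ D)%Z.
  apply/dvdzP; exists S.
  lia.
rewrite Gauss_dvdzl in Hdiv; last first.
  by apply: coprimezXr; rewrite coprimezE.
set w1 := ((w0 * nb%:Z - p 0%N) %/ na%:Z)%Z.
have Hw1 : w1 * na%:Z = w0 * nb%:Z - p 0%N by rewrite divzK.
have Hna0 : na%:Z != 0 by rewrite eqz_nat -lt0n.
have HS2 : S = w1 * nb%:Z ^+ D.
  apply: (mulfI Hna0).
  have : na%:Z * S = (w0 * nb%:Z - p 0%N) * nb%:Z ^+ D by lia.
  by rewrite -Hw1 => ->; ring.
have [W' [W'0 W'D W'rel]] := IH (fun j => p j.+1) w1 HS2.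
exists (fun j => if j is j'.+1 then W' j' else w0); split => //.
case=> [|j] Hj.
  rewrite W'0; lia.
exact: W'rel.
Qed.

Lemma carry_rat (r : rat) (na nb : nat) (Hna : (0 < na)%N) (Hnb : (0 < nb)%N)
  (Hco : coprime na nb) (Hr : r = na%:R / nb%:R) D (p : nat -> int) :
  \sum_(j < D) (p j)%:~R * r ^+ j = 0 ->
  exists W : nat -> int, [/\ W 0%N = 0, W D = 0 &
     forall j, (j < D)%N -> p j = nb%:Z * W j - na%:Z * W j.+1].
Proof.
move=> H; apply: (carry_int Hna Hco (w0 := 0)).
rewrite mul0r; apply: (@intr_inj rat); rewrite rmorph0 rmorph_sum /=.
transitivity (nb%:R ^+ D.-1 * \sum_(j < D) (p j)%:~R * r ^+ j); last by rewrite H mulr0.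
rewrite mulr_sumr; apply: eq_bigr => [[j hj]] _ /=.
rewrite !rmorphM !rmorphXn /= -!pmulrn Hr.
have -> : D.-1 = ((D - j.+1) + j)%N by lia.
have nb0 : (nb%:R : rat) != 0 by rewrite pnatr_eq0 -lt0n.
rewrite exprD exprMn exprVn; field.
by rewrite expf_neq0.
Qed.

Lemma sum_ind (V : nmodType) (D j0 : nat) (v : V) :
  \sum_(j < D) (if (j == j0 :> nat) then v else 0) = if (j0 < D)%N then v else 0.
Proof.
elim: D => [|D IH]; first by rewrite big_ord0.
rewrite big_ord_recr /= IH.
case: eqP => [E|NE] /=.
  by rewrite -E ltnn ltnSn add0r.
rewrite addr0; case: ifP => h1; case: ifP => h2 //; lia.
Qed.

Lemma sum_count (V : nmodType) D (s : seq nat) (F : nat -> V) :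
  all (fun k => k < D)%N s ->
  \sum_(k <- s) F k = \sum_(j < D) F j *+ count_mem (j : nat) s.
Proof.
elim: s => [|x s IH] /= Hall.
  by rewrite big_nil big1.
case/andP: Hall => Hx Hall.
rewrite big_cons IH //.
rewrite [RHS](eq_bigr (fun j : 'I_D => (if (j == x :> nat) then F x else 0) + F j *+ count_mem (j : nat) s)).
  by rewrite big_split /= sum_ind Hx.
move=> j _; rewrite mulrnDr; congr (_ + _).
by rewrite eq_sym; case: eqP => [->|] //=.
Qed.

Lemma size_count D (s : seq nat) : all (fun k => k < D)%N s ->
  (size s)%:Z = \sum_(j < D) (count_mem (j : nat) s)%:Z.
Proof.
move=> Hall.
have -> : (size s)%:Z = \sum_(k <- s) (1 : int).
  elim: s {Hall} => [|x s IH]; first by rewrite big_nil.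
  by rewrite big_cons /= -IH; lia.
rewrite (sum_count _ Hall); apply: eq_bigr => j _.
by rewrite natz.
Qed.

Fixpoint seqof (c : nat -> nat) (D : nat) : seq nat :=
  if D is D'.+1 then seqof c D' ++ nseq (c D') D' else [::].

Lemma seqof_size c D : (size (seqof c D))%:Z = \sum_(j < D) (c j)%:Z.
Proof.
elim: D => [|D IH] /=; first by rewrite big_ord0.
by rewrite size_cat size_nseq big_ord_recr /= -IH; lia.
Qed.

Lemma seqof_val (r : rat) c D :
  \sum_(k <- seqof c D) r ^+ k = \sum_(j < D) (c j)%:R * r ^+ j.
Proof.
elim: D => [|D IH] /=; first by rewrite big_nil big_ord0.
rewrite big_cat IH big_ord_recr /= big_nseq iter_addr addr0.
by rewrite mulr_natl.
Qed.

Lemma seqof_mem c D k : k \in seqof c D -> (k < D)%N.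
Proof.
elim: D => [|D IH] //=.
rewrite mem_cat => /orP [/IH /ltnW //|].
by move/nseqP => [-> _].
Qed.

Lemma W_sum (na nb D : nat) (W : nat -> int) : W 0%N = 0 -> W D = 0 ->
  \sum_(j < D) (nb%:Z * W j - na%:Z * W j.+1) = (nb%:Z - na%:Z) * \sum_(j < D) W j.
Proof.
move=> W0 WD.
have Hs : \sum_(j < D) W j.+1 = \sum_(j < D) W j.
  have : \sum_(j < D.+1) W j = \sum_(j < D.+1) W j by [].
  rewrite {1}big_ord_recl big_ord_recr /= W0 WD add0r addr0 => <-.
  by apply: eq_bigr => i _; rewrite /bump /= add1n.
rewrite sumrB -!mulr_sumr Hs; ring.
Qed.

Lemma bound_exists (t : seq nat) : exists D, all (fun k => k < D)%N t.
Proof.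
exists (foldr maxn 0%N t).+1; elim: t => //= x t IH.
rewrite ltnS leq_maxl /=; apply: sub_all IH => k; rewrite !ltnS => h.
exact: leq_trans h (leq_maxr _ _).
Qed.

Lemma val_count (r : rat) D (s : seq nat) : all (fun k => k < D)%N s ->
  \sum_(k <- s) r ^+ k = \sum_(j < D) (count_mem (j : nat) s)%:R * r ^+ j.
Proof.
move=> h; rewrite (sum_count _ h); apply: eq_bigr => j _; by rewrite mulr_natl.
Qed.

Lemma diff_carry (r : rat) (na nb : nat) (Hna : (0 < na)%N) (Hnb : (0 < nb)%N)
  (Hco : coprime na nb) (Hr : r = na%:R / nb%:R) D (c c' : nat -> nat) :
  \sum_(j < D) (c j)%:R * r ^+ j = \sum_(j < D) (c' j)%:R * r ^+ j ->
  exists W : nat -> int, [/\ W 0%N = 0, W D = 0 &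
     forall j, (j < D)%N -> (c' j)%:Z - (c j)%:Z = nb%:Z * W j - na%:Z * W j.+1].
Proof.
move=> H; apply: (carry_rat Hna Hnb Hco Hr).
rewrite (eq_bigr (fun j : 'I_D => (c' j)%:R * r ^+ j - (c j)%:R * r ^+ j)).
  by rewrite sumrB H subrr.
by move=> j _; rewrite rmorphB /= -!pmulrn mulrBl.
Qed.

Lemma congr_len (r : rat) (na nb : nat) (Hna : (0 < na)%N) (Hnb : (0 < nb)%N)
  (Hco : coprime na nb) (Hr : r = na%:R / nb%:R) (s s' : seq nat) :
  \sum_(k <- s) r ^+ k = \sum_(k <- s') r ^+ k ->
  exists T : int, (size s')%:Z - (size s)%:Z = (nb%:Z - na%:Z) * T.
Proof.
move=> H.
have [D HD] := bound_exists (s ++ s'); rewrite all_cat in HD; case/andP: HD => Hs Hs'.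
rewrite (val_count _ Hs) (val_count _ Hs') in H.
have [W [W0 WD Wr]] := @diff_carry r na nb Hna Hnb Hco Hr D (fun j => count_mem j s) (fun j => count_mem j s') H.
exists (\sum_(j < D) W j).
rewrite (size_count Hs) (size_count Hs') -sumrB -W_sum //.
by apply: eq_bigr => j _; rewrite Wr.
Qed.

Lemma up_nonpos (na nb : nat) (Hna : (0 < na)%N) (W p : nat -> int) hi :
  W 0%N = 0 -> (forall j, (j < hi)%N -> p j = nb%:Z * W j - na%:Z * W j.+1) ->
  (forall j, (j < hi)%N -> 0 <= p j) -> forall j, (j <= hi)%N -> W j <= 0.
Proof.
move=> W0 Wr Hp; elim=> [|j IH] Hj; first by rewrite W0.
have h1 := IH (ltnW Hj); have h2 := Wr j Hj; have h3 := Hp j Hj.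
have Hna' : 0 < na%:Z by lia.
nia.
Qed.

Lemma up_nonneg (na nb : nat) (Hna : (0 < na)%N) (W p : nat -> int) hi :
  W 0%N = 0 -> (forall j, (j < hi)%N -> p j = nb%:Z * W j - na%:Z * W j.+1) ->
  (forall j, (j < hi)%N -> p j <= 0) -> forall j, (j <= hi)%N -> 0 <= W j.
Proof.
move=> W0 Wr Hp j Hj.
have := @up_nonpos na nb Hna (fun j => - W j) (fun j => - p j) hi.
move=> /(_ _ _ _ j Hj); rewrite oppr_le0; apply.
- by rewrite W0 oppr0.
- by move=> i Hi; rewrite Wr //; ring.
- by move=> i Hi; rewrite oppr_ge0 Hp.
Qed.

Lemma down_nonneg (na nb : nat) (Hnb : (0 < nb)%N) (W p : nat -> int) lo D :
  W D = 0 -> (forall j, (lo <= j < D)%N -> p j = nb%:Z * W j - na%:Z * W j.+1) ->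
  (forall j, (lo <= j < D)%N -> 0 <= p j) -> forall j, (lo <= j <= D)%N -> 0 <= W j.
Proof.
move=> WD Wr Hp.
suff : forall i j, (D - j)%N = i -> (lo <= j <= D)%N -> 0 <= W j.
  by move=> H j; apply: H.
elim=> [|i IH] j Hi Hj.
  have -> : j = D by lia.
  by rewrite WD.
have Hj' : (lo <= j < D)%N by lia.
have h1 : 0 <= W j.+1 by apply: IH; lia.
have h2 := Wr j Hj'; have h3 := Hp j Hj'.
have Hnb' : 0 < nb%:Z by lia.
nia.
Qed.

Lemma rpow_gt0 (r : rat) k : 0 < r -> 0 < r ^+ k.
Proof. by move=> h; rewrite exprn_gt0. Qed.

Lemma sum_ge0 (r : rat) (s : seq nat) : 0 < r -> 0 <= \sum_(k <- s) r ^+ k.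
Proof. by move=> h; apply: sumr_ge0 => i _; rewrite ltW // rpow_gt0. Qed.

Lemma sum_gt0 (r : rat) (s : seq nat) : 0 < r -> s != [::] -> 0 < \sum_(k <- s) r ^+ k.
Proof.
move=> h; case: s => [|x s] // _; rewrite big_cons.
by apply: ltr_wpDr; [apply: sum_ge0 | apply: rpow_gt0].
Qed.

Lemma mem_le (r : rat) (s : seq nat) k : 0 < r -> k \in s -> r ^+ k <= \sum_(i <- s) r ^+ i.
Proof.
move=> h; elim: s => [|x s IH] //; rewrite inE big_cons => /orP [/eqP ->|/IH H].
  by rewrite lerDl sum_ge0.
by rewrite (le_trans H) // lerDr ltW // rpow_gt0.
Qed.

Lemma gen_atom (r : rat) (na nb : nat) (Hna : (2 <= na)%N) (Hnb : (2 <= nb)%N)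
  (Hco : coprime na nb) (Hr : r = na%:R / nb%:R) (Hr0 : 0 < r) (N : nat -> Prop) k :
  N k -> is_atom (puiseux_semiring r N) (r ^+ k).
Proof.
move=> Nk; split.
- exists [:: k]; split; last by rewrite big_seq1.
  by move=> i; rewrite inE => /eqP ->.
- by apply: lt0r_neq0; rewrite rpow_gt0.
move=> y z [s1 [Hs1 ->]] [s2 [Hs2 ->]] E.
case: (altP (s1 =P [::])) => [-> | n1]; first by left; rewrite big_nil.
case: (altP (s2 =P [::])) => [-> | n2]; first by right; rewrite big_nil.
exfalso.
have g1 := sum_gt0 Hr0 n1; have g2 := sum_gt0 Hr0 n2.
case: (boolP (k \in s1)) => k1.
  have := mem_le Hr0 k1; lra.
case: (boolP (k \in s2)) => k2.
  have := mem_le Hr0 k2; lra.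
set s := s1 ++ s2.
have Hks : count_mem k s = 0%N.
  by apply/count_memPn; rewrite mem_cat negb_or k1 k2.
have [D HD] := bound_exists (k :: s); rewrite /= in HD; case/andP: HD => kD HD.
have E2 : \sum_(j < D) (nat_of_bool (j == k :> nat))%:R * r ^+ j
          = \sum_(j < D) (count_mem (j : nat) s)%:R * r ^+ j.
  rewrite -val_count // big_cat /= -E.
  rewrite (eq_bigr (fun j : 'I_D => if (j == k :> nat) then r ^+ k else 0)).
    by rewrite sum_ind kD.
  by move=> j _; case: eqP => [->|] /=; rewrite ?mul1r ?mul0r.
have [W [W0 WD Wr]] := @diff_carry r na nb (ltnW Hna) (ltnW Hnb) Hco Hr D
   (fun j => nat_of_bool (j == k)) (fun j => count_mem j s) E2.
have h1 : W k <= 0.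
  apply: (@up_nonpos na nb (ltnW Hna) W (fun j => (count_mem j s)%:Z - (nat_of_bool (j == k))%:Z) k) => //.
    by move=> j Hj; apply: Wr; lia.
  move=> j Hj; have -> : (j == k) = false by apply/eqP; lia.
  by rewrite subr0.
have h2 : 0 <= W k.+1.
  apply: (@down_nonneg na nb (ltnW Hnb) W (fun j => (count_mem j s)%:Z - (nat_of_bool (j == k))%:Z) k.+1 D) => //.
    by move=> j Hj; apply: Wr; lia.
  move=> j Hj; have -> : (j == k) = false by apply/eqP; lia.
  by rewrite subr0.
  by lia.
have h3 := Wr k kD; rewrite Hks eqxx /= in h3.
have Hna' : 2 <= na%:Z by lia.
have Hnb' : 2 <= nb%:Z by lia.
have [hk|hk] : W k = 0 \/ W k <= -1 by lia.
  have [hk1|hk1] : W k.+1 = 0 \/ 1 <= W k.+1 by lia.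
    by rewrite hk hk1 in h3; lia.
  nia.
nia.
Qed.

Lemma atom_gen (r : rat) (Hr0 : 0 < r) (N : nat -> Prop) a :
  is_atom (puiseux_semiring r N) a -> exists k, N k /\ a = r ^+ k.
Proof.
case=> [[s [Hs ->]] a0 Hat].
case: s Hs a0 Hat => [|k t] Hs a0 Hat; first by rewrite big_nil eqxx in a0.
exists k; split; first by apply: Hs; rewrite inE eqxx.
rewrite big_cons in Hat *.
case: (altP (t =P [::])) => [-> | nt]; first by rewrite big_nil addr0.
exfalso.
have := Hat (r ^+ k) (\sum_(i <- t) r ^+ i).
case.
- by exists [:: k]; split; [move=> i; rewrite inE => /eqP ->; apply: Hs; rewrite inE eqxx | rewrite big_seq1].
- by exists t; split => // i it; apply: Hs; rewrite inE it orbT.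
- by [].
- by move=> h; move: (rpow_gt0 k Hr0); rewrite h ltxx.
- by move=> h; move: (sum_gt0 Hr0 nt); rewrite h ltxx.
Qed.

Lemma len_iff (r : rat) (na nb : nat) (Hna : (2 <= na)%N) (Hnb : (2 <= nb)%N)
  (Hco : coprime na nb) (Hr : r = na%:R / nb%:R) (Hr0 : 0 < r) (N : nat -> Prop) x l :
  in_lengths (puiseux_semiring r N) x l <->
  exists s : seq nat, [/\ size s = l, (forall k, k \in s -> N k) & x = \sum_(k <- s) r ^+ k].
Proof.
split.
  case=> sa [Hsz Hat ->].
  elim: sa l Hsz Hat => [|a sa IH] l Hsz Hat.
    by exists [::]; split => //; rewrite !big_nil.
  have [k [Nk ->]] := atom_gen Hr0 (Hat a (mem_head _ _)).
  have Hat' : forall b, b \in sa -> is_atom (puiseux_semiring r N) b.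
    by move=> b hb; apply: Hat; rewrite inE hb orbT.
  have [s [Hs1 Hs2 Hs3]] := IH (size sa) erefl Hat'.
  exists (k :: s); split.
  - by rewrite /= Hs1 -Hsz.
  - by move=> i; rewrite inE => /orP [/eqP ->|/Hs2].
  - by rewrite !big_cons Hs3.
case=> s [Hsz HN ->].
exists (map (fun k => r ^+ k) s); split.
- by rewrite size_map.
- move=> a /mapP [k ks ->]; apply: (gen_atom Hna Hnb Hco Hr Hr0); exact: HN.
- by rewrite big_map.
Qed.

Lemma val_nseq (r : rat) n k : \sum_(i <- nseq n k) r ^+ i = n%:R * r ^+ k.
Proof. by rewrite big_nseq iter_addr addr0 mulr_natl. Qed.

Lemma trade_val (r : rat) (na nb : nat) (Hnb : (0 < nb)%N) (Hr : r = na%:R / nb%:R) k :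
  nb%:R * r ^+ k.+1 = na%:R * r ^+ k.
Proof.
have nb0 : (nb%:R : rat) != 0 by rewrite pnatr_eq0 -lt0n.
by rewrite exprS Hr; field.
Qed.

Lemma dist_of (M : rat -> Prop) x l e : M x -> (0 < e)%N -> in_lengths M x l ->
  in_lengths M x (l + e) -> (forall k, (l < k < l + e)%N -> ~ in_lengths M x k) ->
  delta_set M e.
Proof. by move=> Mx e0 h1 h2 h3; exists x; split => //; split => //; exists l. Qed.

Lemma delta_base (r : rat) (na nb : nat) (Hna : (2 <= na)%N) (Hnb : (2 <= nb)%N)
  (Hco : coprime na nb) (Hr : r = na%:R / nb%:R) (Hr0 : 0 < r) (Hne : na != nb)
  (N : nat -> Prop) k :
  N k -> N k.+1 -> delta_set (puiseux_semiring r N) (maxn na nb - minn na nb).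
Proof.
move=> Nk Nk1.
set x := \sum_(i <- nseq na k) r ^+ i.
have Mx : puiseux_semiring r N x.
  by exists (nseq na k); split => // i /nseqP [-> _].
have L1 : in_lengths (puiseux_semiring r N) x na.
  apply/(len_iff Hna Hnb Hco Hr Hr0); exists (nseq na k); split => //.
  - by rewrite size_nseq.
  - by move=> i /nseqP [-> _].
have L2 : in_lengths (puiseux_semiring r N) x nb.
  apply/(len_iff Hna Hnb Hco Hr Hr0); exists (nseq nb k.+1); split => //.
  - by rewrite size_nseq.
  - by move=> i /nseqP [-> _].
  - by rewrite /x !val_nseq (trade_val (ltnW Hnb) Hr).
have Hmid : forall z, in_lengths (puiseux_semiring r N) x z ->
    exists T : int, z%:Z - na%:Z = (nb%:Z - na%:Z) * T.
  move=> z /(len_iff Hna Hnb Hco Hr Hr0) [s [Hsz _ Hv]].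
  have [T HT] := congr_len (ltnW Hna) (ltnW Hnb) Hco Hr (s := nseq na k) (s' := s) Hv.
  by exists T; rewrite -HT size_nseq Hsz.
apply: (dist_of (x := x) (l := minn na nb)) => //.
- by move: Hne; lia.
- by case: (leqP na nb).
- have -> : (minn na nb + (maxn na nb - minn na nb) = maxn na nb)%N by lia.
  by case: (leqP na nb).
move=> z Hz /Hmid [T HT].
case: (ltngtP na nb) Hne => h _ //.
- have h1 : (na < z < nb)%N by lia.
  have [hT|hT] : T <= 0 \/ 1 <= T by lia.
    nia.
  nia.
- have h1 : (nb < z < na)%N by lia.
  have [hT|hT] : T <= 0 \/ 1 <= T by lia.
    nia.
  nia.
Qed.

Definition crel (na nb D : nat) (c c' : nat -> nat) (W : nat -> int) :=
  [/\ W 0%N = 0, W D = 0 &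
     forall j, (j < D)%N -> (c' j)%:Z - (c j)%:Z = nb%:Z * W j - na%:Z * W j.+1].
Definition meas (D : nat) (W : nat -> int) := (\sum_(j < D.+1) `|W j|)%N.
Definition vl (r : rat) (D : nat) (c : nat -> nat) := \sum_(j < D) (c j)%:R * r ^+ j.
Definition sz (D : nat) (c : nat -> nat) := \sum_(j < D) (c j)%:Z.

Lemma sum_ind_nat (D j0 : nat) (v : nat) :
  (\sum_(j < D) (if (j == j0 :> nat) then v else 0) = if (j0 < D) then v else 0)%N.
Proof.
elim: D => [|D IH]; first by rewrite big_ord0.
rewrite big_ord_recr /= IH.
case: eqP => [E|NE] /=.
  by rewrite -E ltnn ltnSn add0n.
rewrite addn0; case: ifP => h1; case: ifP => h2 //; lia.
Qed.

Lemma meas_step D (W W2 : nat -> int) j1 : (j1 <= D)%N ->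
  (forall j, (`|W2 j| + (j == j1))%N = `|W j|%N) -> (meas D W2).+1 = meas D W.
Proof.
move=> Hj H; rewrite /meas.
have -> : (\sum_(j < D.+1) `|W j|)%N = (\sum_(j < D.+1) (`|W2 j| + (if (j == j1 :> nat) then 1 else 0)))%N.
  by apply: eq_bigr => j _; rewrite -H; case: eqP.
rewrite big_split /= sum_ind_nat ltnS Hj.
by rewrite addn1.
Qed.

Lemma fwd_step (r : rat) (na nb : nat) (Hnb : (0 < nb)%N) (Hr : r = na%:R / nb%:R)
  D (c c' : nat -> nat) (W : nat -> int) j1 :
  (0 < j1 < D)%N -> 0 < W j1 -> W j1.-1 <= 0 -> crel na nb D c c' W ->
  exists c2 W2, [/\ (meas D W2).+1 = meas D W, crel na nb D c2 c' W2,
     vl r D c2 = vl r D c & sz D c2 = sz D c + (nb%:Z - na%:Z)].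
Proof.
move=> Hj Wp Wm [W0 WD Wr].
have Hc : (na <= c j1.-1)%N.
  have hj : (j1.-1 < D)%N by lia.
  have := Wr _ hj; rewrite prednK; last by lia.
  move=> h; have Hna' : 0 <= na%:Z by lia.
  have Hnb' : 0 <= nb%:Z by lia.
  nia.
set c2 := fun j => if j == j1.-1 then (c j - na)%N else if j == j1 then (c j + nb)%N else c j.
set W2 := fun j => if j == j1 then W j - 1 else W j.
exists c2, W2; split.
- apply: (meas_step (j1 := j1)); first by lia.
  move=> j; rewrite /W2; case: eqP => [->|_] /=; lia.
- split.
  + by rewrite /W2; case: eqP => //; lia.
  + by rewrite /W2; case: eqP => //; lia.
  + move=> j Hj'; have := Wr j Hj'; rewrite /c2 /W2.
    case: (j =P j1.-1) => [E|NE]; case: (j =P j1) => [E2|NE2];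
      case: (j.+1 =P j1) => [E3|NE3]; try (rewrite E); lia.
- rewrite /vl /c2.
  rewrite (eq_bigr (fun j : 'I_D => ((c j)%:R * r ^+ j
     + (if (j == j1.-1 :> nat) then - (na%:R * r ^+ j1.-1) else 0))
     + (if (j == j1 :> nat) then nb%:R * r ^+ j1 else 0))).
    rewrite !big_split /= !sum_ind.
    have -> : (j1.-1 < D)%N by lia.
    have -> : (j1 < D)%N by lia.
    have := trade_val Hnb Hr j1.-1; rewrite prednK; last by lia.
    by move=> ->; rewrite subrK.
  move=> j _; case: eqP => [E|NE]; case: eqP => [E2|NE2] //=.
  + lia.
  + by rewrite E natrB // mulrBl addr0.
  + by rewrite E2 natrD mulrDl addr0.
  + by rewrite addr0 addr0.
- rewrite /sz /c2.
  rewrite (eq_bigr (fun j : 'I_D => ((c j)%:Z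
     + (if (j == j1.-1 :> nat) then - na%:Z else 0))
     + (if (j == j1 :> nat) then nb%:Z else 0))).
    rewrite !big_split /= !sum_ind.
    have -> : (j1.-1 < D)%N by lia.
    have -> : (j1 < D)%N by lia.
    ring.
  move=> j _; case: eqP => [E|NE]; case: eqP => [E2|NE2] //=; try (rewrite E); lia.
Qed.

Lemma bwd_step (r : rat) (na nb : nat) (Hnb : (0 < nb)%N) (Hr : r = na%:R / nb%:R)
  D (c c' : nat -> nat) (W : nat -> int) j1 :
  (0 < j1 < D)%N -> W j1 < 0 -> 0 <= W j1.+1 -> crel na nb D c c' W ->
  exists c2 W2, [/\ (meas D W2).+1 = meas D W, crel na nb D c2 c' W2,
     vl r D c2 = vl r D c & sz D c2 = sz D c - (nb%:Z - na%:Z)].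
Proof.
move=> Hj Wn Wp [W0 WD Wr].
have Hc : (nb <= c j1)%N.
  have hj : (j1 < D)%N by lia.
  have := Wr _ hj.
  move=> h; have Hna' : 0 <= na%:Z by lia.
  have Hnb' : 0 <= nb%:Z by lia.
  nia.
set c2 := fun j => if j == j1.-1 then (c j + na)%N else if j == j1 then (c j - nb)%N else c j.
set W2 := fun j => if j == j1 then W j + 1 else W j.
exists c2, W2; split.
- apply: (meas_step (j1 := j1)); first by lia.
  move=> j; rewrite /W2; case: eqP => [->|_] /=; lia.
- split.
  + by rewrite /W2; case: eqP => //; lia.
  + by rewrite /W2; case: eqP => //; lia.
  + move=> j Hj'; have := Wr j Hj'; rewrite /c2 /W2.
    case: (j =P j1.-1) => [E|NE]; case: (j =P j1) => [E2|NE2];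
      case: (j.+1 =P j1) => [E3|NE3]; try (rewrite E2); lia.
- rewrite /vl /c2.
  rewrite (eq_bigr (fun j : 'I_D => ((c j)%:R * r ^+ j
     + (if (j == j1.-1 :> nat) then na%:R * r ^+ j1.-1 else 0))
     + (if (j == j1 :> nat) then - (nb%:R * r ^+ j1) else 0))).
    rewrite !big_split /= !sum_ind.
    have -> : (j1.-1 < D)%N by lia.
    have -> : (j1 < D)%N by lia.
    have := trade_val Hnb Hr j1.-1; rewrite prednK; last by lia.
    by move=> ->; rewrite addrK.
  move=> j _; case: eqP => [E|NE]; case: eqP => [E2|NE2] //=.
  + lia.
  + by rewrite E natrD mulrDl addr0.
  + by rewrite E2 natrB // mulrBl addr0.
  + by rewrite addr0 addr0.
- rewrite /sz /c2.
  rewrite (eq_bigr (fun j : 'I_D => ((c j)%:Z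
     + (if (j == j1.-1 :> nat) then na%:Z else 0))
     + (if (j == j1 :> nat) then - nb%:Z else 0))).
    rewrite !big_split /= !sum_ind.
    have -> : (j1.-1 < D)%N by lia.
    have -> : (j1 < D)%N by lia.
    ring.
  move=> j _; case: eqP => [E|NE]; case: eqP => [E2|NE2] //=; try (rewrite E2); lia.
Qed.

Lemma between_step (Sc Sc' Sc2 z k g e : int) : g != 0 -> (e = 1 \/ e = -1) ->
  Sc2 = Sc + e * g -> z = Sc + k * g -> k != 0 ->
  (Sc <= z /\ z <= Sc' \/ Sc' <= z /\ z <= Sc) ->
  (Sc2 <= z /\ z <= Sc' \/ Sc' <= z /\ z <= Sc2).
Proof.
move=> g0 He H2 Hz k0 Hb.
have [hg|hg] : 0 < g \/ g < 0 by lia.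
  have [hk|hk] : 1 <= k \/ k <= -1 by lia.
    have : g <= k * g by nia.
    case: He => ?; subst e; lia.
  have : k * g <= - g by nia.
  case: He => ?; subst e; lia.
have [hk|hk] : 1 <= k \/ k <= -1 by lia.
  have : k * g <= g by nia.
  case: He => ?; subst e; lia.
have : - g <= k * g by nia.
case: He => ?; subst e; lia.
Qed.

Lemma chain (r : rat) (na nb : nat) (Hna : (0 < na)%N) (Hnb : (0 < nb)%N)
  (Hne : na != nb) (Hr : r = na%:R / nb%:R) D (c' : nat -> nat) (x : rat) :
  vl r D c' = x ->
  forall n (c : nat -> nat) (W : nat -> int), meas D W = n -> crel na nb D c c' W -> vl r D c = x ->
  forall z k : int, z = sz D c + k * (nb%:Z - na%:Z) ->
  (sz D c <= z /\ z <= sz D c' \/ sz D c' <= z /\ z <= sz D c) ->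
  exists s : seq nat, (size s)%:Z = z /\ \sum_(i <- s) r ^+ i = x.
Proof.
move=> Hx; elim=> [|n IH] c W Hm Hrel Hv z k Hz Hb.
- have HW : forall j, (j <= D)%N -> W j = 0.
    move=> j Hj; move/eqP: Hm; rewrite /meas sum_nat_eq0 => /forallP.
    move=> /(_ (Ordinal (Hj : (j < D.+1)%N))) /= /eqP; lia.
  case: Hrel => [W0 WD Wr].
  have Hsz : sz D c' = sz D c.
    apply: eq_bigr => j _.
    have h1 : W j = 0 := HW _ (ltnW (ltn_ord j)).
    have h2 : W j.+1 = 0 := HW _ (ltn_ord j).
    have := Wr j (ltn_ord j); rewrite h1 h2; lia.
  exists (seqof c D); split; last by rewrite seqof_val.
  rewrite seqof_size -/(sz D c) Hz.
  have -> : k = 0 by move: Hb; rewrite Hsz Hz; nia.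
  by rewrite mul0r addr0.
have g0 : nb%:Z - na%:Z != 0 by move: Hne; lia.
case: (altP (k =P 0)) => [k0|k0].
  exists (seqof c D); split; last by rewrite seqof_val.
  by rewrite seqof_size -/(sz D c) Hz k0 mul0r addr0.
have Hm0 : meas D W != 0%N by rewrite Hm.
case: Hrel => [W0 WD Wr].
case: (boolP [exists j : 'I_D.+1, 0 < W j]) => [/existsP [j0 Hj0] | Hnp].
- have exP : exists j, (j <= D)%N && (0 < W j).
    by exists j0; rewrite Hj0 -ltnS ltn_ord.
  case: (ex_minnP exP) => j1 /andP [Hj1D Hj1] Hmin.
  have Hj1r : (0 < j1 < D)%N.
    apply/andP; split.
      by rewrite lt0n; apply/eqP => E; move: Hj1; rewrite E W0.
    by rewrite ltn_neqAle Hj1D andbT; apply/eqP => E; move: Hj1; rewrite E WD.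
  have Wm : W j1.-1 <= 0.
    rewrite leNgt; apply/negP => h.
    have := Hmin j1.-1; rewrite h andbT => /(_ (leq_trans (leq_pred _) Hj1D)); lia.
  have [c2 [W2 [Hm2 Hrel2 Hv2 Hsz2]]] :=
    @fwd_step r na nb Hnb Hr D c c' W j1 Hj1r Hj1 Wm (And3 W0 WD Wr).
  apply: (IH c2 W2 _ Hrel2 _ z (k - 1)).
  - by move: Hm2; rewrite Hm => -[].
  - by rewrite Hv2.
  - rewrite Hsz2 Hz; ring.
  - have Hsz2' : sz D c2 = sz D c + 1 * (nb%:Z - na%:Z) by rewrite mul1r.
    exact: (between_step g0 (or_introl erefl) Hsz2' Hz k0 Hb).
- have exP : exists j, (j <= D)%N && (W j < 0).
    move: Hm0; rewrite /meas sum_nat_eq0 => /forallPn [j0 Hj0].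
    exists j0; rewrite -ltnS ltn_ord /=.
    have : ~~ (0 < W j0) by move: Hnp; rewrite negb_exists => /forallP.
    lia.
  have ubP : forall j, (j <= D)%N && (W j < 0) -> (j <= D)%N by move=> j /andP [].
  case: (ex_maxnP exP ubP) => j1 /andP [Hj1D Hj1] Hmax.
  have Hj1r : (0 < j1 < D)%N.
    apply/andP; split.
      by rewrite lt0n; apply/eqP => E; move: Hj1; rewrite E W0.
    by rewrite ltn_neqAle Hj1D andbT; apply/eqP => E; move: Hj1; rewrite E WD.
  have Wp : 0 <= W j1.+1.
    rewrite leNgt; apply/negP => h.
    have := Hmax j1.+1; rewrite h andbT.
    have -> : (j1.+1 <= D)%N by lia.
    move=> /(_ isT); lia.
  have [c2 [W2 [Hm2 Hrel2 Hv2 Hsz2]]] :=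
    @bwd_step r na nb Hnb Hr D c c' W j1 Hj1r Hj1 Wp (And3 W0 WD Wr).
  apply: (IH c2 W2 _ Hrel2 _ z (k + 1)).
  - by move: Hm2; rewrite Hm => -[].
  - by rewrite Hv2.
  - rewrite Hsz2 Hz; ring.
  - have Hsz2' : sz D c2 = sz D c + (-1) * (nb%:Z - na%:Z) by rewrite Hsz2; ring.
    exact: (between_step g0 (or_intror erefl) Hsz2' Hz k0 Hb).
Qed.

Lemma delta_full (r : rat) (na nb : nat) (Hna : (2 <= na)%N) (Hnb : (2 <= nb)%N)
  (Hco : coprime na nb) (Hr : r = na%:R / nb%:R) (Hr0 : 0 < r) (Hne : na != nb)
  (N : nat -> Prop) (HN : forall n, N n) e :
  delta_set (puiseux_semiring r N) e -> e = (maxn na nb - minn na nb)%N.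
Proof.
case=> x [Mx [e0 [l [L1 L2 Hbet]]]].
have [s [Hs _ Hsx]] := proj1 (len_iff Hna Hnb Hco Hr Hr0 _ _ _) L1.
have [s' [Hs' _ Hsx']] := proj1 (len_iff Hna Hnb Hco Hr Hr0 _ _ _) L2.
have [T HT] := congr_len (ltnW Hna) (ltnW Hnb) Hco Hr (etrans (esym Hsx) Hsx').
rewrite Hs Hs' in HT.
have Hge : (maxn na nb - minn na nb <= e)%N.
  case: (ltngtP na nb) Hne => h _ //.
  - have [hT|hT] : T <= 0 \/ 1 <= T by lia.
      nia.
    nia.
  - have [hT|hT] : T <= -1 \/ 0 <= T by lia.
      nia.
    nia.
apply/eqP; rewrite eqn_leq Hge andbT leqNgt; apply/negP => Hlt.
have [D HD] := bound_exists (s ++ s'); rewrite all_cat in HD; case/andP: HD => HDs HDs'.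
set c := fun j => count_mem j s.
set c' := fun j => count_mem j s'.
have Hv : vl r D c = x by rewrite /vl Hsx (val_count _ HDs).
have Hv' : vl r D c' = x by rewrite /vl Hsx' (val_count _ HDs').
have [W [W0 WD Wr]] := @diff_carry r na nb (ltnW Hna) (ltnW Hnb) Hco Hr D c c'
   (etrans Hv (esym Hv')).
have Hsz : sz D c = l%:Z by rewrite /sz -(size_count HDs) Hs.
have Hsz' : sz D c' = (l + e)%N%:Z by rewrite /sz -(size_count HDs') Hs'.
have [k Hk] : exists k : int, (l + (maxn na nb - minn na nb))%N%:Z = l%:Z + k * (nb%:Z - na%:Z).
  case: (ltngtP na nb) Hne => h _ //.
  - by exists 1; lia.
  - by exists (-1); lia.
have Hz : (l + (maxn na nb - minn na nb))%N%:Z = sz D c + k * (nb%:Z - na%:Z) by rewrite Hsz.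
have Hb1 : sz D c <= (l + (maxn na nb - minn na nb))%N%:Z by rewrite Hsz; lia.
have Hb2 : (l + (maxn na nb - minn na nb))%N%:Z <= sz D c' by rewrite Hsz'; lia.
have [s'' [Hs'' Hv'']] := @chain r na nb (ltnW Hna) (ltnW Hnb) Hne Hr D c' x Hv'
   (meas D W) c W erefl (And3 W0 WD Wr) Hv _ k Hz (or_introl (conj Hb1 Hb2)).
apply: (Hbet (l + (maxn na nb - minn na nb))%N).
  by apply/andP; split; lia.
apply/(len_iff Hna Hnb Hco Hr Hr0); exists s''; split => //.
by apply/eqP; rewrite -eqz_nat Hs''.
Qed.

Lemma PoszX (n m : nat) : (n ^ m)%N%:Z = (n%:Z) ^+ m.
Proof. by elim: m => [|m IH] //; rewrite expnS exprS PoszM IH. Qed.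

Lemma key_claim (r : rat) (na nb : nat) (Hna : (2 <= na)%N) (Hnb : (2 <= nb)%N)
  (Hco : coprime na nb) (Hr : r = na%:R / nb%:R) (Hr0 : 0 < r)
  (N : nat -> Prop) m (Hm : (1 < m)%N) (Hgap : forall j, (0 < j < m)%N -> ~ N j)
  (s : seq nat) : (forall k, k \in s -> N k) ->
  \sum_(i <- s) r ^+ i = (na ^ m)%:R ->
  (size s = na ^ m)%N \/ exists T : int, 0 <= T /\ (size s)%:Z - (nb ^ m)%:Z = (nb%:Z - na%:Z) * T.
Proof.
move=> HsN Hsx.
have [D HD] := bound_exists (m :: s); rewrite /= in HD; case/andP: HD => mD HD.
set c := fun j => count_mem j s.
have Hv : \sum_(j < D) (c j)%:R * r ^+ j = (na ^ m)%:R by rewrite -Hsx (val_count _ HD).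
have Hsz : (size s)%:Z = \sum_(j < D) (c j)%:Z by rewrite (size_count HD).
have c0 : forall j, (0 < j < m)%N -> c j = 0%N.
  move=> j Hj; apply/count_memPn; apply/negP => /HsN; exact: Hgap.
have Hna0 : (0 < na)%N by lia.
have Hnb0 : (0 < nb)%N by lia.
set p := fun j => (c j)%:Z - (if j == 0%N then (na ^ m)%N%:Z else 0).
have Hp : \sum_(j < D) (p j)%:~R * r ^+ j = 0.
  rewrite (eq_bigr (fun j : 'I_D => (c j)%:R * r ^+ j - (if (j == 0%N :> nat) then (na ^ m)%:R else 0))).
    by rewrite sumrB Hv sum_ind (leq_ltn_trans (leq0n _) mD) subrr.
  move=> j _; rewrite /p rmorphB /= -pmulrn mulrBl; congr (_ - _).
  by case: eqP => [->|_]; rewrite ?expr0 ?mulr1 ?mul0r // -pmulrn.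
have [W [W0 WD Wr]] := carry_rat Hna0 Hnb0 Hco Hr Hp.
have Wpos : forall j, (1 <= j <= D)%N -> 0 <= W j.
  apply: (@down_nonneg na nb Hnb0 W p 1 D WD) => j Hj; first by apply: Wr; lia.
  rewrite /p; have -> : (j == 0%N) = false by apply/eqP; lia.
  by rewrite subr0.
have Wrec : forall j, (j.+1 <= m)%N -> (na%:Z) ^+ j * W j.+1 = (nb%:Z) ^+ j * W 1%N.
  elim=> [|j IH] Hj; first by rewrite !expr0 !mul1r.
  have hj : (j.+1 < D)%N by lia.
  have h := Wr j.+1 hj.
  have e1 : na%:Z * W j.+2 = nb%:Z * W j.+1.
    move: h; rewrite /p c0; last by lia.
    by rewrite /=; lia.
  have hj2 : (j.+1 <= m)%N by lia.
  have IH' := IH hj2.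
  rewrite !exprS.
  transitivity (na%:Z ^+ j * (na%:Z * W j.+2)); first ring.
  rewrite e1.
  transitivity (nb%:Z * (na%:Z ^+ j * W j.+1)); first ring.
  rewrite IH'; ring.
set A := (na%:Z) ^+ m.-1.
have A0 : 0 < A by rewrite exprn_gt0 //; lia.
have Hnam : (na ^ m)%N%:Z = na%:Z * A.
  by rewrite PoszX /A -exprS prednK //; lia.
have HW1 : (A %| W 1%N)%Z.
  have := Wrec m.-1; rewrite prednK; last by lia.
  move=> /(_ (leqnn _)) E.
  rewrite -(@Gauss_dvdzr _ ((nb%:Z) ^+ m.-1)); last first.
    by apply: coprimezXl; apply: coprimezXr; rewrite coprimezE.
  by rewrite -E dvdz_mulr.
case/dvdzP: HW1 => K HK.
have Hp0 := Wr 0%N (leq_ltn_trans (leq0n _) mD).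
rewrite /p /= W0 mulr0 add0r HK in Hp0.
have W1ge : 0 <= W 1%N by apply: Wpos; lia.
have K0 : 0 <= K by rewrite HK in W1ge; nia.
have K1 : K <= 1 by nia.
have [Ke|Ke] : K = 0 \/ K = 1 by lia.
-
  left.
  have Wz : forall j, (1 <= j <= D)%N -> W j = 0.
    elim=> [|j IH] Hj //.
    case: (posnP j) => [->|jp]; first by rewrite HK Ke mul0r.
    have hj : (j < D)%N by lia.
    have h := Wr j hj.
    have pj : p j = (c j)%:Z.
      rewrite /p; case: eqP => [E|_]; [lia | by rewrite subr0].
    rewrite pj IH in h; last by lia.
    have hj1 : (1 <= j.+1 <= D)%N by lia.
    have := Wpos j.+1 hj1.
    have : (0 < na%:Z) by lia.
    nia.
  have HW0 : \sum_(j < D) W j = 0.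
    apply: big1 => j _; case: (posnP j) => [->|jp]; first exact: W0.
    by apply: Wz; rewrite jp /= ltnW.
  have Hsp : \sum_(j < D) p j = (nb%:Z - na%:Z) * \sum_(j < D) W j.
    by rewrite -W_sum //; apply: eq_bigr => j _; apply: Wr.
  have Hsp2 : \sum_(j < D) p j = (size s)%:Z - (na ^ m)%N%:Z.
    rewrite Hsz /p sumrB sum_ind.
    by rewrite (leq_ltn_trans (leq0n _) mD).
  rewrite HW0 mulr0 in Hsp.
  apply/eqP; rewrite -eqz_nat; apply/eqP; lia.
- right.
  have c00 : c 0%N = 0%N.
    move: Hp0; rewrite Ke mul1r Hnam; lia.
  have Hpow : (nb ^ m)%:R * r ^+ m = (na ^ m)%:R :> rat.
    have nb0 : (nb%:R : rat) != 0 by rewrite pnatr_eq0 -lt0n.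
    by rewrite !natrX Hr exprMn exprVn; field; rewrite expf_neq0.
  set p2 := fun j => (c j)%:Z - (if j == m then (nb ^ m)%N%:Z else 0).
  have Hp2 : \sum_(j < D) (p2 j)%:~R * r ^+ j = 0.
    rewrite (eq_bigr (fun j : 'I_D => (c j)%:R * r ^+ j - (if (j == m :> nat) then (nb ^ m)%:R * r ^+ m else 0))).
      by rewrite sumrB Hv sum_ind mD Hpow subrr.
    move=> j _; rewrite /p2 rmorphB /= -pmulrn mulrBl; congr (_ - _).
    by case: eqP => [->|_]; rewrite ?mul0r // -pmulrn.
  have [W2 [W20 W2D W2r]] := carry_rat Hna0 Hnb0 Hco Hr Hp2.
  have W2lo : forall j, (j <= m)%N -> 0 <= W2 j.
    apply: (@up_nonneg na nb Hna0 W2 p2 m W20) => j Hj.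
      by apply: W2r; lia.
    rewrite /p2; have -> : (j == m) = false by apply/eqP; lia.
    case: (posnP j) => [->|jp]; first by rewrite c00.
    by rewrite c0 //; rewrite jp Hj.
  have W2hi : forall j, (m.+1 <= j <= D)%N -> 0 <= W2 j.
    apply: (@down_nonneg na nb Hnb0 W2 p2 m.+1 D W2D) => j Hj.
      by apply: W2r; lia.
    rewrite /p2; have -> : (j == m) = false by apply/eqP; lia.
    by rewrite subr0.
  exists (\sum_(j < D) W2 j); split.
    apply: sumr_ge0 => j _; case: (leqP j m) => h; first exact: W2lo.
    by apply: W2hi; rewrite h /= ltnW.
  have Hsp : \sum_(j < D) p2 j = (nb%:Z - na%:Z) * \sum_(j < D) W2 j.
    by rewrite -W_sum //; apply: eq_bigr => j _; apply: W2r.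
  by rewrite -Hsp Hsz /p2 sumrB sum_ind mD.
Qed.


Lemma delta_gap (r : rat) (na nb : nat) (Hna : (2 <= na)%N) (Hnb : (2 <= nb)%N)
  (Hco : coprime na nb) (Hr : r = na%:R / nb%:R) (Hr0 : 0 < r) (Hne : na != nb)
  (N : nat -> Prop) m (N0 : N 0%N) (Nm : N m) (Hm : (1 < m)%N)
  (Hgap : forall j, (0 < j < m)%N -> ~ N j) :
  delta_set (puiseux_semiring r N) (maxn (na ^ m) (nb ^ m) - minn (na ^ m) (nb ^ m)).
Proof.
set x : rat := (na ^ m)%:R.
have Hpow : (nb ^ m)%:R * r ^+ m = (na ^ m)%:R :> rat.
  have nb0 : (nb%:R : rat) != 0 by rewrite pnatr_eq0 -lt0n; lia.
  by rewrite !natrX Hr exprMn exprVn; field; rewrite expf_neq0.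
have Mx : puiseux_semiring r N x.
  exists (nseq (na ^ m) 0%N); split; first by move=> i /nseqP [-> _].
  by rewrite val_nseq expr0 mulr1.
have L1 : in_lengths (puiseux_semiring r N) x (na ^ m).
  apply/(len_iff Hna Hnb Hco Hr Hr0); exists (nseq (na ^ m) 0%N); split => //.
  - by rewrite size_nseq.
  - by move=> i /nseqP [-> _].
  - by rewrite val_nseq expr0 mulr1.
have L2 : in_lengths (puiseux_semiring r N) x (nb ^ m).
  apply/(len_iff Hna Hnb Hco Hr Hr0); exists (nseq (nb ^ m) m); split => //.
  - by rewrite size_nseq.
  - by move=> i /nseqP [-> _].
  - by rewrite val_nseq Hpow.
have Hm0 : (0 < m)%N by lia.
have Hne' : (na ^ m != nb ^ m)%N by rewrite eqn_exp2r.
apply: (dist_of (x := x) (l := minn (na ^ m) (nb ^ m))) => //.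
- by move: Hne'; lia.
- by case: (leqP (na ^ m) (nb ^ m)).
- have -> : (minn (na ^ m) (nb ^ m) + (maxn (na ^ m) (nb ^ m) - minn (na ^ m) (nb ^ m))
      = maxn (na ^ m) (nb ^ m))%N by lia.
  by case: (leqP (na ^ m) (nb ^ m)).
move=> z Hz /(len_iff Hna Hnb Hco Hr Hr0) [s [Hsz HsN Hsx]].
have := key_claim Hna Hnb Hco Hr Hr0 Hm Hgap HsN (esym Hsx).
rewrite Hsz; case=> [E|[T [T0 HT]]].
  by move: Hz; rewrite E; lia.
case: (ltngtP na nb) Hne => h _ //.
- have h2 : (na ^ m < nb ^ m)%N by rewrite ltn_exp2r.
  have h3 : (z < nb ^ m)%N by lia.
  nia.
- have h2 : (nb ^ m < na ^ m)%N by rewrite ltn_exp2r.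
  have h3 : (nb ^ m < z)%N by lia.
  nia.
Qed.

Lemma powdiff (x y : int) k : 1 <= y -> y <= x ->
  (k.+1)%:Z * (x - y) <= x ^+ k.+1 - y ^+ k.+1.
Proof.
move=> y1 yx; elim: k => [|k IH]; first by rewrite !expr1; lia.
rewrite (exprS x k.+1) (exprS y k.+1).
have Y1 : 1 <= y ^+ k.+1 by rewrite exprn_ege1.
set X := x ^+ k.+1 in IH *; set Y := y ^+ k.+1 in IH Y1 *.
have h0 : 0 <= X - Y by apply: le_trans IH; apply: mulr_ge0; lia.
have h1 : X - Y <= x * (X - Y).
  have : 0 <= (x - 1) * (X - Y) by apply: mulr_ge0; lia.
  lia.
have h2 : x - y <= (x - y) * Y.
  have : 0 <= (x - y) * (Y - 1) by apply: mulr_ge0; lia.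
  lia.
lia.
Qed.

Lemma gap_gt_aux (na nb m : nat) : (1 <= na)%N -> (na < nb)%N -> (1 < m)%N ->
  (nb - na < nb ^ m - na ^ m)%N /\ (na ^ m < nb ^ m)%N.
Proof.
move=> h1 h hm.
have ha : 1 <= na%:Z by lia.
have hb : na%:Z <= nb%:Z by lia.
have H := @powdiff nb%:Z na%:Z m.-1 ha hb.
rewrite prednK in H; last by lia.
rewrite -!PoszX in H.
have h3 : (na ^ m < nb ^ m)%N by rewrite ltn_exp2r; lia.
have h4 : 2 * (nb%:Z - na%:Z) <= m%:Z * (nb%:Z - na%:Z) by apply: ler_wpM2r; lia.
split; [lia | exact: h3].
Qed.

Lemma gap_gt (na nb m : nat) : (1 <= na)%N -> (1 <= nb)%N -> na != nb -> (1 < m)%N ->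
  (maxn na nb - minn na nb < maxn (na ^ m) (nb ^ m) - minn (na ^ m) (nb ^ m))%N.
Proof.
move=> h1 h2 hne hm.
case: (ltngtP na nb) hne => h _ //.
  have [H1 H2] := gap_gt_aux h1 h hm; lia.
have [H1 H2] := gap_gt_aux h2 h hm; lia.
Qed.

Lemma min_exists (P : nat -> Prop) : (exists n, P n) ->
  exists m, P m /\ forall j, (j < m)%N -> ~ P j.
Proof.
move=> [n Pn]; elim: n {-2}n (leqnn n) Pn => [|n IH] k Hk Pk.
  exists k; split => // j Hj; lia.
case: (classic (exists j, (j < k)%N /\ P j)) => [[j [Hj Pj]]|H].
  by apply: (IH j) => //; lia.
by exists k; split => // j Hj Pj; apply: H; exists j.
Qed.

Theorem mainTheorem11 (r : rat) (N : nat -> Prop) :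
  0 < r ->
  (~ exists n : nat, r = n%:R) ->
  (1 < numq r)%R ->
  numerical_monoid N ->
  ((exists d : nat, forall e : nat, delta_set (puiseux_semiring r N) e <-> e = d)
   <-> (forall n : nat, N n)).
Proof.
move=> Hr0 Hnint Hnum [N0 Nadd [b0 Hb0]].
set na := `|numq r|%N.
set nb := `|denq r|%N.
have Ena : numq r = na%:Z by rewrite /na gez0_abs //; lia.
have Enb : denq r = nb%:Z by rewrite /nb gez0_abs // ltW // denq_gt0.
have Hna : (2 <= na)%N by lia.
have Hco : coprime na nb by exact: coprime_num_den.
have Hr : r = na%:R / nb%:R.
  by rewrite -{1}(divq_num_den r) Ena Enb -!pmulrn.
have Hnb : (2 <= nb)%N.
  have h0 : (0 < nb)%N by have := denq_gt0 r; rewrite Enb; lia.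
  have h1 : nb != 1%N.
    apply/eqP => h; apply: Hnint; exists na.
    by rewrite Hr h divr1.
  lia.
have Hne : na != nb.
  apply/eqP => E; move: Hco; rewrite E /coprime gcdnn; lia.
split.
- move=> [d Hd].
  case: (classic (N 1%N)) => [N1|N1].
    by elim=> [|n IH] //; rewrite -addn1; apply: Nadd.
  exfalso.
  have Hb : N b0 by apply: Hb0.
  have Hb1 : N b0.+1 by apply: Hb0.
  have D1 := delta_base Hna Hnb Hco Hr Hr0 Hne Hb Hb1.
  have [m [[m0 Nm] Hmin]] := @min_exists (fun j => (0 < j)%N /\ N j) (ex_intro _ b0.+1 (conj (ltn0Sn _) Hb1)).
  have Hm : (1 < m)%N by case: (ltngtP m 1) => h //; [lia | by move: Nm; rewrite h].
  have Hgap : forall j, (0 < j < m)%N -> ~ N j.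
    by move=> j /andP [j0 jm] Nj; apply: (Hmin j jm).
  have D2 := delta_gap Hna Hnb Hco Hr Hr0 Hne N0 Nm Hm Hgap.
  have E1 := proj1 (Hd _) D1.
  have E2 := proj1 (Hd _) D2.
  have := gap_gt (ltnW Hna) (ltnW Hnb) Hne Hm.
  by rewrite E1 E2 ltnn.
- move=> HN; exists (maxn na nb - minn na nb)%N => e; split.
    exact: (delta_full Hna Hnb Hco Hr Hr0 Hne HN).
  move=> ->; exact: (delta_base Hna Hnb Hco Hr Hr0 Hne (HN 0%N) (HN 1%N)).
Qed.
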